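(* Let $Q^\dagger$ be any linear combination of products of the form $\prod_{j\in Y}s_j^\dagger$ (over arbitrary vertex subsets $Y$). For every $k$-local operator $O$, the $(2k+1)$-fold iterated commutator $[\cdots[[O,Q^\dagger],Q^\dagger],\dots,Q^\dagger]$ vanishes. Consequently, if $H$ is a $k$-local operator with $H(Q^\dagger)^q|\overline 0\rangle=0$ for all $q\in\{0,1,\dots,2k\}$, then $H(Q^\dagger)^p|\overline 0\rangle=0$ for all integers $p\ge0$.
   Context: System of $N$ qubits with local basis $|0\rangle,|1\rangle$; $s_i^\dagger$ acts on site $i$ as $s^\dagger|0\rangle=|1\rangle$, $s^\dagger|1\rangle=0$, $s_i=(s_i^\dagger)^\dagger$; $|\overline 0\rangle=|0\rangle^{\otimes N}$. Every operator has a unique expansion in normal-ordered strings $s^\dagger_{j_1}\cdots s^\dagger_{j_n}s_{k_1}\cdots s_{k_m}$ (the $j$'s pairwise distinct, the $k$'s pairwise distinct); an operator is $k$-local if every string with nonzero coefficient in its expansion involves at most $k$ distinct sites. *)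

(* Defs.v *)
From HB Require Import structures.
From mathcomp Require Import all_boot all_order all_algebra.
Set Implicit Arguments. Unset Strict Implicit. Unset Printing Implicit Defensive.
Import GRing.Theory.
Local Open Scope ring_scope.

(* N qubits; computational basis state x (0 <= x < 2^N) has site i in state
   |1> iff bit i of x is set. Operators are 2^N x 2^N matrices over a
   commutative ring R (the paper: complex numbers). *)

Definition bit (x i : nat) : bool := odd (x %/ 2 ^ i).

Section Qubits.
Variables (R : comNzRingType) (N : nat).

Definition Op := 'M[R]_(2 ^ N).

(* s_i^dagger : |..0_i..> -> |..1_i..>, |..1_i..> -> 0 *)
Definition sdag (i : 'I_N) : Op :=
  \matrix_(x, y) ((~~ bit y i) && ((x : nat) == y + 2 ^ i)%N)%:R.

(* s_i = (s_i^dagger)^dagger (entries are real, so adjoint = transpose) *)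
Definition sann (i : 'I_N) : Op := (sdag i)^T.

Definition vac : 'cV[R]_(2 ^ N) := \col_x ((x : nat) == 0%N)%:R.

(* normal-ordered string  prod_{j in J} s_j^dagger  prod_{k in K} s_k
   (creation operators on distinct sites commute, likewise annihilations) *)
Definition nstring (J K : {set 'I_N}) : Op :=
  (\prod_(j in J) sdag j) * (\prod_(k in K) sann k).

Definition klocal (k : nat) (O : Op) : Prop :=
  exists c : {set 'I_N} -> {set 'I_N} -> R,
    O = \sum_(J : {set 'I_N}) \sum_(K : {set 'I_N}) c J K *: nstring J K
    /\ forall J K, c J K != 0 -> (#|J :|: K| <= k)%N.

Definition Qdag (a : {set 'I_N} -> R) : Op :=
  \sum_(Y : {set 'I_N}) a Y *: \prod_(j in Y) sdag j.

Definition comm (A B : Op) : Op := A * B - B * A.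

Definition itcomm (n : nat) (O Q : Op) : Op := iter n (fun X => comm X Q) O.

End Qubits.

(* Main.v *)
Require Import Defs.
From mathcomp Require Import all_boot all_order all_algebra zify.
Set Implicit Arguments. Unset Strict Implicit. Unset Printing Implicit Defensive.
Import GRing.Theory.
Local Open Scope ring_scope.

Local Open Scope nat_scope.

Lemma bit_self x i : bit (x + 2 ^ i) i = ~~ bit x i.
Proof.
rewrite /bit addnC -{1}(mul1n (2 ^ i)) divnMDl ?expn_gt0 //.
Qed.

Lemma bit_dec x j : ~~ bit x j ->
  exists h r, x = h * 2 ^ j.+1 + r /\ r < 2 ^ j.
Proof.
move=> hb; exists (x %/ 2 ^ j)./2, (x %% 2 ^ j); split; last first.
  by rewrite ltn_pmod ?expn_gt0.
have e := odd_double_half (x %/ 2 ^ j).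
move: hb; rewrite /bit => /negbTE ho; rewrite ho add0n in e.
rewrite {1}(divn_eq x (2 ^ j)); congr (_ + _).
by rewrite expnS mulnA muln2 e.
Qed.

Lemma bit_other x i j : i != j -> ~~ bit x j -> bit (x + 2 ^ j) i = bit x i.
Proof.
move=> nij hb; case: (ltngtP i j) => hij; last by rewrite hij eqxx in nij.
- rewrite /bit -(subnK (ltnW hij)) expnD addnC divnMDl ?expn_gt0 //.
  rewrite oddD oddX /=. have: (j - i != 0)%N by rewrite subn_eq0 -ltnNge.
  by move/negbTE => ->.
- have [h [r [-> hr]]] := bit_dec hb.
  rewrite -addnA /bit -(subnK hij) expnD [2 ^ (i - _) * _]mulnC !divnMA.
  rewrite !divnMDl ?expn_gt0 //.
  have h1 : r < 2 ^ j.+1 by apply: (ltn_trans hr); rewrite ltn_exp2l.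
  have h2 : r + 2 ^ j < 2 ^ j.+1 by rewrite expnS mul2n -addnn ltn_add2r.
  by rewrite (divn_small h1) (divn_small h2).
Qed.

Lemma bit_le y i : bit y i -> (2 ^ i <= y)%N.
Proof.
rewrite /bit => ho; rewrite -divn_gt0 ?expn_gt0 //.
by case: (y %/ 2 ^ i) ho.
Qed.

Lemma bit_bound z i N : (z < 2 ^ N)%N -> (i < N)%N -> ~~ bit z i -> (z + 2 ^ i < 2 ^ N)%N.
Proof.
move=> hz hi hb; have [h [r [ez hr]]] := bit_dec hb.
have eN : 2 ^ N = 2 ^ (N - i.+1) * 2 ^ i.+1 by rewrite -expnD subnK.
rewrite eN in hz *; rewrite ez in hz *; move: hz hr.
rewrite expnS. set T := 2 ^ i. set M := 2 ^ (N - i.+1).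
move=> hz hr.
have hM : h < M.
  rewrite ltnNge; apply/negP => hle; move: hz; rewrite ltnNge => /negP; apply.
  by apply: leq_trans (leq_addr _ _); rewrite leq_mul2r hle orbT.
have : (h.+1 * (2 * T) <= M * (2 * T))%N by rewrite leq_mul2r hM orbT.
rewrite mulSn. lia.
Qed.

Local Open Scope ring_scope.

Section Mat.
Variables (R : comNzRingType) (N : nat).
Local Notation Op := (Op R N).

Definition pm (f : nat -> option nat) : Op :=
  \matrix_(x, y) (f (y : nat) == Some (x : nat))%:R.

Lemma pm_mul f g : (forall (z : 'I_(2 ^ N)) v, g (z : nat) = Some v -> (v < 2 ^ N)%N) ->
  pm f * pm g = pm (fun z => obind f (g z)).
Proof.
move=> hg; apply/matrixP => x z; rewrite -mulmxE !mxE.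
case E: (g z) => [v|] /=.
  have hv := hg z v E.
  rewrite (bigD1 (Ordinal hv)) //= !mxE E eqxx mulr1 big1 ?addr0 //.
  move=> y hy; rewrite !mxE E.
  have: (Some v == Some (y : nat)) = false.
    apply/negbTE; apply: contra hy => /eqP [] ev; apply/eqP/val_inj => /=.
    by rewrite ev.
  by move=> ->; rewrite mulr0.
by rewrite big1 // => y _; rewrite !mxE E mulr0.
Qed.

Lemma pm0 : pm (fun _ => None) = 0.
Proof. by apply/matrixP => x y; rewrite !mxE. Qed.

Lemma pm_ext f g : (forall y, (y < 2 ^ N)%N -> f y = g y) -> pm f = pm g.
Proof. by move=> h; apply/matrixP => x y; rewrite !mxE h. Qed.

Definition fd (i : nat) y := if bit y i then None else Some (y + 2 ^ i)%N.
Definition fa (i : nat) y := if bit y i then Some (y - 2 ^ i)%N else None.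

Lemma sdagE (i : 'I_N) : sdag R i = pm (fd i).
Proof.
apply/matrixP => x y; rewrite !mxE /fd.
by case: (bit y i) => //=; rewrite eq_sym.
Qed.

Lemma sannE (i : 'I_N) : sann R i = pm (fa i).
Proof.
apply/matrixP => x y; rewrite /sann !mxE /fa; congr ((nat_of_bool _)%:R).
apply/idP/idP.
  case/andP => bx /eqP ->; rewrite bit_self bx /=; apply/eqP; congr Some.
  by rewrite addnK.
case bi: (bit y i) => //= /eqP [] ex.
have hle := bit_le bi.
have ey : (y : nat) = (x + 2 ^ i)%N by rewrite -ex subnK.
by move: bi; rewrite ey bit_self => ->; rewrite eqxx.
Qed.

Lemma fd_bound (i : 'I_N) (z : 'I_(2 ^ N)) v : fd i z = Some v -> (v < 2 ^ N)%N.
Proof.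
rewrite /fd; case b: (bit z i) => //= -[] <-.
by apply: bit_bound => //; rewrite b.
Qed.

Lemma fa_bound (i : 'I_N) (z : 'I_(2 ^ N)) v : fa i z = Some v -> (v < 2 ^ N)%N.
Proof.
rewrite /fa; case: (bit z i) => //= -[] <-.
exact: leq_ltn_trans (leq_subr _ _) (ltn_ord z).
Qed.

Lemma sdag_comm (i j : 'I_N) : GRing.comm (sdag R i) (sdag R j).
Proof.
rewrite /GRing.comm !sdagE !pm_mul; try exact: fd_bound.
apply: pm_ext => y _.
have [<-|nij] := eqVneq (i : nat) j; first by [].
have nji : (j : nat) != i by rewrite eq_sym.
rewrite /fd; case bj: (bit y j); case bi: (bit y i) => //=.
- by rewrite (bit_other nji (negbT bi)) bj.
- by rewrite (bit_other nij (negbT bj)) bi.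
- by rewrite (bit_other nji (negbT bi)) (bit_other nij (negbT bj)) bi bj /= addnAC.
Qed.

Lemma sdag_sq (i : 'I_N) : sdag R i * sdag R i = 0.
Proof.
rewrite sdagE pm_mul; last exact: fd_bound.
rewrite -pm0; apply: pm_ext => y _.
rewrite /fd; case bi: (bit y i) => //=; by rewrite bit_self bi.
Qed.

Lemma sdag_sann (i j : 'I_N) : (i : nat) != j -> GRing.comm (sdag R j) (sann R i).
Proof.
move=> nij; rewrite /GRing.comm sdagE sannE !pm_mul; try exact: fd_bound; try exact: fa_bound.
apply: pm_ext => y _.
rewrite /fd /fa; case bi: (bit y i) => /=.
  have hle := bit_le bi.
  have [x ey bx] : exists2 x, y = (x + 2 ^ i)%N & ~~ bit x i.
    exists (y - 2 ^ i)%N; first by rewrite subnK.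
    by move: bi; rewrite -{1}(subnK hle) bit_self => ->.
  rewrite ey addnK bit_other // 1?eq_sym //.
  case bj: (bit x j) => //=.
  rewrite addnAC bit_self bit_other ?bj // bx /=.
  by rewrite addnK.
case bj: (bit y j) => //=.
by rewrite bit_other ?bi ?bj.
Qed.

End Mat.

Section Alg.
Variables (R : comNzRingType) (N : nat).
Local Notation Op := (Op R N).

Definition cprod (Y : {set 'I_N}) : Op := \prod_(j in Y) sdag R j.

Lemma sAr (x y : Op) (c : R) : x * (c *: y) = c *: (x * y).
Proof. by rewrite -!mulmxE scalemxAr. Qed.
Lemma sAl (x y : Op) (c : R) : (c *: x) * y = c *: (x * y).
Proof. by rewrite -!mulmxE scalemxAl. Qed.

Lemma commZ (x y : Op) (c : R) : GRing.comm x y -> GRing.comm x (c *: y).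
Proof. by move=> h; rewrite /GRing.comm sAr h sAl. Qed.

Lemma comm_sdag_cprod j Y : GRing.comm (sdag R j) (cprod Y).
Proof. by apply: commr_prod => i _; apply: sdag_comm. Qed.

Lemma comm_cprod Y Z : GRing.comm (cprod Y) (cprod Z).
Proof. by apply: commr_prod => i _; apply: commr_sym; apply: comm_sdag_cprod. Qed.

Lemma prod_notin (r : seq 'I_N) (P : pred 'I_N) s : s \notin r ->
  \prod_(j <- r | P j && (j != s)) sdag R j = \prod_(j <- r | P j) sdag R j.
Proof.
elim: r => [|x r IH] /=; first by rewrite !big_nil.
rewrite inE negb_or => /andP [nx ns]; rewrite !big_cons IH // eq_sym nx andbT.
by [].
Qed.

Lemma prod_rem (r : seq 'I_N) (P : pred 'I_N) s : uniq r -> s \in r -> P s ->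
  \prod_(j <- r | P j) sdag R j = sdag R s * \prod_(j <- r | P j && (j != s)) sdag R j.
Proof.
elim: r => [|x r IH] //= /andP [xr ur]; rewrite inE => hs Ps.
rewrite !big_cons.
have [exs|nxs] := eqVneq x s.
  by subst x; rewrite Ps andbF prod_notin.
rewrite eq_sym (negbTE nxs) /= in hs.
rewrite IH // andbT; case: (P x) => //.
by rewrite !mulrA sdag_comm.
Qed.

Lemma cprodD1 (Y : {set 'I_N}) (s : 'I_N) : s \in Y -> cprod Y = sdag R s * cprod (Y :\ s).
Proof.
move=> sY; rewrite /cprod (@prod_rem _ (fun j => j \in Y) s (index_enum_uniq _)) ?mem_index_enum //.
congr (_ * _); apply: eq_bigl => j; by rewrite in_setD1 andbC.
Qed.

Lemma comm_sdag_sum s (P : pred {set 'I_N}) (c : {set 'I_N} -> R) F :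
  GRing.comm (sdag R s) (\sum_(Y | P Y) c Y *: cprod (F Y)).
Proof. by apply: commr_sum => Y _; apply: commZ; apply: comm_sdag_cprod. Qed.

Lemma comm_sums (P P' : pred {set 'I_N}) (c c' : {set 'I_N} -> R) :
  GRing.comm (\sum_(Y | P Y) c Y *: cprod Y) (\sum_(Y | P' Y) c' Y *: cprod Y).
Proof.
apply: commr_sum => Y _; apply: commZ; apply: commr_sym.
apply: commr_sum => Z _; apply: commZ; exact: comm_cprod.
Qed.

Lemma nil_lemma (a x : Op) j : GRing.comm a x -> x * x = 0 -> a ^+ j = 0 ->
  (a + x) ^+ j.+1 = 0.
Proof.
move=> hc hx ha; rewrite exprDn_comm //; apply: big1 => -[i hi] _ /=.
have [h2|h2] := leqP 2 i.
  by rewrite -(subnK h2) exprD expr2 hx mulr0 mulr0 mul0rn.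
have e : (j.+1 - i = j + (1 - i))%N by lia.
by rewrite e exprD ha !mul0r mul0rn.
Qed.

Lemma nilpotent (S : {set 'I_N}) (P : pred {set 'I_N}) (c : {set 'I_N} -> R) :
  (forall Y, P Y -> Y :&: S != set0) ->
  (\sum_(Y | P Y) c Y *: cprod Y) ^+ (#|S|.+1) = 0.
Proof.
move Hm: #|S| => m; elim: m S P Hm => [|m IH] S P Hm hP.
  move/eqP: Hm; rewrite cards_eq0 => /eqP eS.
  rewrite big1 ?expr1 // => Y /hP; by rewrite eS setI0 eqxx.
have [s sS] : exists s, s \in S.
  by apply/set0Pn; rewrite -card_gt0 Hm.
have HS' : #|S :\ s| = m by move: Hm; rewrite (cardsD1 s S) sS add1n => -[].
rewrite (bigID (fun Y : {set 'I_N} => s \notin Y)) /=.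
apply: nil_lemma.
- exact: comm_sums.
- set B := \sum_(Y | P Y && ~~ (s \notin Y)) c Y *: cprod (Y :\ s).
  have -> : \sum_(Y | P Y && ~~ (s \notin Y)) c Y *: cprod Y = sdag R s * B.
    rewrite /B mulr_sumr; apply: eq_bigr => Y /andP [_]; rewrite negbK => sY.
    by rewrite sAr (cprodD1 sY).
  have hB : GRing.comm (sdag R s) B by apply: comm_sdag_sum.
  by rewrite mulrA -(mulrA _ B) -hB mulrA sdag_sq !mul0r.
- apply: (IH (S :\ s)) => // Y /andP [hY sY].
  case/set0Pn: (hP Y hY) => y; rewrite inE => /andP [yY yS].
  apply/set0Pn; exists y; rewrite !inE yY yS andbT /=.
  by apply: contraNneq sY => <-.
Qed.

Lemma commD (X Y Q : Op) : comm (X + Y) Q = comm X Q + comm Y Q.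
Proof. by rewrite /comm mulrDl mulrDr opprD addrACA. Qed.
Lemma commZl (c : R) (X Q : Op) : comm (c *: X) Q = c *: comm X Q.
Proof. by rewrite /comm scalerBr sAl sAr. Qed.
Lemma comm0 (Q : Op) : comm 0 Q = 0.
Proof. by rewrite /comm mul0r mulr0 subr0. Qed.

Lemma itcommD n (X Y Q : Op) : itcomm n (X + Y) Q = itcomm n X Q + itcomm n Y Q.
Proof. by elim: n => //= n IH; rewrite IH commD. Qed.
Lemma itcommZ n (c : R) (X Q : Op) : itcomm n (c *: X) Q = c *: itcomm n X Q.
Proof. by elim: n => //= n IH; rewrite IH commZl. Qed.
Lemma itcomm0 n (Q : Op) : itcomm n 0 Q = 0.
Proof. by elim: n => //= n IH; rewrite IH comm0. Qed.

Lemma itcomm_split n (O A B : Op) : GRing.comm B O -> GRing.comm B A ->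
  itcomm n O (A + B) = itcomm n O A.
Proof.
move=> hO hA.
have hc : forall n, GRing.comm B (itcomm n O A).
  elim=> //= m IH; rewrite /comm; apply: commrB; apply: commrM => //.
elim: n => //= n IH; rewrite IH /comm.
have := hc n; rewrite /GRing.comm => e.
by rewrite mulrDr mulrDl e opprD addrACA subrr addr0.
Qed.

Inductive sp (O A : Op) (P : nat -> nat -> Prop) : Op -> Prop :=
| sp0 : sp O A P 0
| spt i m c : P i m -> sp O A P (c *: (A ^+ i * O * A ^+ m))
| spD X Y : sp O A P X -> sp O A P Y -> sp O A P (X + Y).

Lemma sp_comm (O A : Op) (P P' : nat -> nat -> Prop) X :
  (forall i m, P i m -> P' i m.+1 /\ P' i.+1 m) ->
  sp O A P X -> sp O A P' (comm X A).
Proof.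
move=> hP; elim=> [|i m c him|Y Z _ IY _ IZ].
- by rewrite comm0; apply: sp0.
- have [h1 h2] := hP _ _ him.
  have -> : comm (c *: (A ^+ i * O * A ^+ m)) A =
     c *: (A ^+ i * O * A ^+ m.+1) + (- c) *: (A ^+ i.+1 * O * A ^+ m).
    rewrite /comm sAl sAr scaleNr exprSr exprS !mulrA.
    by [].
  by apply: spD; apply: spt.
- by rewrite commD; apply: spD.
Qed.

Lemma sp_itcomm (O A : Op) n : sp O A (fun i m => (i + m = n)%N) (itcomm n O A).
Proof.
elim: n => [|n IH] /=.
  have h := @spt O A (fun i m => (i + m = 0)%N) 0 0 1 erefl.
  by rewrite scale1r expr0 mul1r mulr1 in h.
by apply: sp_comm IH => i m <-; split; rewrite ?addnS ?addSn.
Qed.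

Lemma sp_zero (O A : Op) k X : A ^+ k.+1 = 0 ->
  sp O A (fun i m => (i + m = (2 * k + 1))%N) X -> X = 0.
Proof.
move=> hA; elim=> [//|i m c him|Y Z _ -> _ ->]; last by rewrite addr0.
have [hi|hi] := leqP k.+1 i.
  by rewrite -(subnK hi) exprD hA mulr0 !mul0r scaler0.
have hm : (k.+1 <= m)%N by lia.
by rewrite -(subnK hm) exprD hA !mulr0 scaler0.
Qed.

Lemma zl (V : zmodType) (a b c d : V) : a - b - c = (a - c) - (b - d) + - d.
Proof. rewrite opprB (addrC d (-b)) -(addrA (a - c)) addrK. by rewrite addrAC. Qed.

Lemma sp_itcomm2 (O A : Op) n :
  sp O A (fun i m => (m < n)%N) (itcomm n O A - O * A ^+ n).
Proof.
elim: n => [|n IH] /=.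
  by rewrite expr0 mulr1 subrr; apply: sp0.
have -> : comm (itcomm n O A) A - O * A ^+ n.+1 =
   comm (itcomm n O A - O * A ^+ n) A + (-1) *: (A ^+ 1 * O * A ^+ n).
  rewrite /comm scaleN1r expr1 exprSr !mulrA mulrBl mulrBr !mulrA; exact: zl.
apply: spD; last by apply: spt.
by apply: sp_comm IH => i m h; split; lia.
Qed.

End Alg.

Section Main.
Variables (R : comNzRingType) (N : nat).
Local Notation Op := (Op R N).

Lemma string_zero (J K : {set 'I_N}) k (a : {set 'I_N} -> R) :
  (#|J :|: K| <= k)%N -> itcomm (2 * k + 1) (nstring R J K) (Qdag a) = 0.
Proof.
move=> hk; set S := J :|: K in hk *.
have eQ : Qdag a = \sum_(Y | Y :&: S != set0) a Y *: cprod R Y +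
                   \sum_(Y | ~~ (Y :&: S != set0)) a Y *: cprod R Y.
  by rewrite /Qdag (bigID (fun Y : {set 'I_N} => Y :&: S != set0)) /=.
rewrite eQ itcomm_split.
- apply: sp_zero; last exact: sp_itcomm.
  have h := @nilpotent R N S (fun Y => Y :&: S != set0) a (fun Y hY => hY).
  have e : (k.+1 = k - #|S| + #|S|.+1)%N by lia.
  by rewrite e exprD h mulr0.
  apply: commr_sym; apply: commr_sum => Y; rewrite negbK => /eqP hY.
  apply: commZ; apply: commr_sym.
  rewrite /nstring; apply: commrM; first exact: comm_cprod.
  apply: commr_prod => kk kK; apply: commr_sym; apply: commr_prod => j jY.
  apply: commr_sym; apply: sdag_sann; apply/eqP => e.
  have : j \in Y :&: S by rewrite inE jY /S inE -(val_inj e) kK orbT.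
  by rewrite hY inE.
- exact: comm_sums.
Qed.

Lemma part1 k (a : {set 'I_N} -> R) (O : Op) :
  klocal k O -> itcomm (2 * k + 1) O (Qdag a) = 0.
Proof.
case=> c [-> hc].
have lin : forall (I : finType) (F : I -> Op),
    itcomm (2 * k + 1) (\sum_i F i) (Qdag a) = \sum_i itcomm (2 * k + 1) (F i) (Qdag a).
  move=> I F; apply: (big_morph (fun X => itcomm (2 * k + 1) X (Qdag a))).
    by move=> X Y; rewrite itcommD.
  exact: itcomm0.
rewrite lin; apply: big1 => J _; rewrite lin; apply: big1 => K _.
rewrite itcommZ; have [->|nz] := eqVneq (c J K) 0; first by rewrite scale0r.
by rewrite string_zero ?scaler0 // hc.
Qed.

Lemma vanish (H Q : Op) n j Z :
  (forall p, (p < n + j)%N -> H *m (Q ^+ p) *m vac R N = 0) ->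
  sp H Q (fun i m => (m < n)%N) Z -> Z *m (Q ^+ j) *m vac R N = 0.
Proof.
move=> IH; elim=> [|i m c hm|Y Z' _ IY _ IZ].
- by rewrite !mul0mx.
- rewrite -!scalemxAl -!mulmxE -!mulmxA.
  have -> : H *m (Q ^+ m *m (Q ^+ j *m vac R N)) = H *m Q ^+ (m + j) *m vac R N.
    by rewrite exprD -mulmxE !mulmxA.
  by rewrite IH ?mulmx0 ?scaler0 // ltn_add2r.
- by rewrite !mulmxDl IY IZ addr0.
Qed.

End Main.

Theorem proposition9 (R : comNzRingType) (N k : nat) (a : {set 'I_N} -> R) :
  (forall O : Op R N, klocal k O -> itcomm (2 * k + 1) O (Qdag a) = 0)
  /\
  (forall H : Op R N, klocal k H ->
     (forall q : nat, (q <= 2 * k)%N -> H *m (Qdag a ^+ q) *m vac R N = 0) ->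
     forall p : nat, H *m (Qdag a ^+ p) *m vac R N = 0).
Proof.
split; first by move=> O; apply: part1.
move=> H hH hq p; elim/ltn_ind: p => p IH.
have [hp|hp] := leqP p (2 * k); first exact: hq.
set n := (2 * k + 1)%N.
have ep : p = (n + (p - n))%N by rewrite /n; lia.
have e1 : H * Qdag a ^+ n = - (itcomm n H (Qdag a) - H * Qdag a ^+ n).
  by rewrite part1 // sub0r opprK.
rewrite ep exprD.
have -> : H *m (Qdag a ^+ n * Qdag a ^+ (p - n)) = (H * Qdag a ^+ n) *m Qdag a ^+ (p - n).
  by rewrite -!mulmxE mulmxA.
rewrite e1 !mulNmx.
rewrite (@vanish R N H (Qdag a) n) ?oppr0 //; last exact: sp_itcomm2.
by move=> p' hp'; apply: IH; move: hp'; rewrite /n; lia.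
Qed.
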